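(* For every $k\ge2$, $\mathcal A_k\subseteq\mathcal A_{k+1}$ and $\mathcal A_k\subseteq\mathcal A$; that is, $(\mathcal A_k)_k$ is a nested sequence of subsets of $\mathcal A$.
   Context: $d\ge2$; $\mathcal S_{d-1}=\{(w_1,\dots,w_{d-1})\in[0,1]^{d-1}:\sum w_i\le1\}$, $w_d=1-\sum_{i<d}w_i$. $\mathcal A$ is the family of convex functions $A:\mathcal S_{d-1}\to[1/d,1]$ with $\max(w_1,\dots,w_d)\le A({\boldsymbol w})\le1$ for all ${\boldsymbol w}$. $\Gamma_k$ is the set of ${\boldsymbol\alpha}\in\{0,\dots,k\}^{d-1}$ with $\sum\alpha_i\le k$, $\alpha_d=k-\sum_{i<d}\alpha_i$, and $b_{\boldsymbol\alpha}({\boldsymbol w};k)=\frac{k!}{\alpha_1!\cdots\alpha_d!}\prod_{i=1}^dw_i^{\alpha_i}$. Let ${\boldsymbol v}_0={\bf 0}$, ${\boldsymbol v}_r={\boldsymbol e}_r\in\mathbb R^{d-1}$. For coefficients $(\beta_{\boldsymbol\alpha})_{{\boldsymbol\alpha}\in\Gamma_k}$ define $\Delta_{s,r}\beta_{\boldsymbol\alpha}=\beta_{{\boldsymbol\alpha}+{\boldsymbol v}_s}-\beta_{{\boldsymbol\alpha}+{\boldsymbol v}_r}$ and $\Delta_{t,r}\Delta_{s,r}\beta_{\boldsymbol\alpha}=\Delta_{s,r}\beta_{{\boldsymbol\alpha}+{\boldsymbol v}_t}-\Delta_{s,r}\beta_{{\boldsymbol\alpha}+{\boldsymbol v}_r}$.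 $\mathcal A_k$ is the set of functions ${\boldsymbol w}\mapsto\sum_{{\boldsymbol\alpha}\in\Gamma_k}\beta_{\boldsymbol\alpha}b_{\boldsymbol\alpha}({\boldsymbol w};k)$ with all $\beta_{\boldsymbol\alpha}\in[0,1]$ satisfying: (R1) for all ${\boldsymbol\alpha}\in\Gamma_{k-2}$ and $i\in\{1,\dots,d-1\}$: $\Delta^2_{i,0}\beta_{\boldsymbol\alpha}-\sum_{j\in\{1,\dots,d-1\},j\ne i}|\Delta_{i,0}\Delta_{j,0}\beta_{\boldsymbol\alpha}|\ge0$; (R2) $\beta_{\boldsymbol\alpha}=1$ for ${\boldsymbol\alpha}={\bf 0}$ and for ${\boldsymbol\alpha}=k{\boldsymbol e}_i$, $i=1,\dots,d-1$; (R3) $\beta_{\boldsymbol\alpha}\ge1-1/k$ for ${\boldsymbol\alpha}={\boldsymbol e}_i$, ${\boldsymbol\alpha}=(k-1){\boldsymbol e}_i$, and ${\boldsymbol\alpha}=(k-1){\boldsymbol e}_i+{\boldsymbol e}_j$, for all $i\ne j$ in $\{1,\dots,d-1\}$. *)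

(* Defs.v *)
(* Points of the simplex S_{d-1} are row vectors in
   'rV[R]_(d.-1); multi-indices are nat-valued finite functions on 'I_(d.-1). *)
From HB Require Import structures.
From mathcomp Require Import all_boot all_order all_algebra.
Set Implicit Arguments. Unset Strict Implicit. Unset Printing Implicit Defensive.
Import Order.TTheory GRing.Theory Num.Theory.
Local Open Scope ring_scope.

Section Defs.
Variable R : realFieldType.
Variable d : nat.
Local Notation n := d.-1.

Definition midx := {ffun 'I_n -> nat}.

Definition msum (a : midx) : nat := (\sum_(i < n) a i)%N.
Definition inGamma (m : nat) (a : midx) : bool := (msum a <= m)%N.

(* alpha + v_r, with v_0 = 0 and v_r = e_r for r = 1..d-1 *)
Definition addv (r : nat) (a : midx) : midx :=
  [ffun i : 'I_n => (a i + ((r == (nat_of_ord i).+1) : nat))%N].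

Definition mzero : midx := [ffun _ => 0%N].
Definition mscale (c : nat) (r : 'I_n) : midx :=
  [ffun i => if i == r then c else 0%N].
Definition mpair (c : nat) (r : 'I_n) (c' : nat) (s : 'I_n) : midx :=
  [ffun i => (if i == r then c else 0%N) + (if i == s then c' else 0%N)]%N.

Definition wlast (w : 'rV[R]_n) : R := 1 - \sum_(i < n) w 0 i.

Definition simplex (w : 'rV[R]_n) : Prop :=
  (forall i, 0 <= w 0 i) /\ \sum_(i < n) w 0 i <= 1.

Definition bern (k : nat) (a : midx) (w : 'rV[R]_n) : R :=
  (k`!)%:R / ((\prod_(i < n) (a i)`! * (k - msum a)`!)%N)%:R
  * (\prod_(i < n) w 0 i ^+ a i) * wlast w ^+ (k - msum a).

Definition bpoly (k : nat) (beta : midx -> R) (w : 'rV[R]_n) : R :=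
  \sum_(a : {ffun 'I_n -> 'I_k.+1} | inGamma k [ffun i => nat_of_ord (a i)])
     beta [ffun i => nat_of_ord (a i)] * bern k [ffun i => nat_of_ord (a i)] w.

Definition D1 (beta : midx -> R) (s r : nat) (a : midx) : R :=
  beta (addv s a) - beta (addv r a).
Definition D2 (beta : midx -> R) (t s r : nat) (a : midx) : R :=
  D1 beta s r (addv t a) - D1 beta s r (addv r a).

Definition admissible (k : nat) (beta : midx -> R) : Prop :=
  (forall a, inGamma k a -> 0 <= beta a <= 1) /\
  (* (R1) *)
  (forall a : midx, inGamma (k - 2) a -> forall i : 'I_n,
     D2 beta i.+1 i.+1 0 a
     - \sum_(j < n | j != i) `| D2 beta i.+1 j.+1 0 a | >= 0) /\
  (* (R2) *)
  beta mzero = 1 /\ (forall i : 'I_n, beta (mscale k i) = 1) /\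
  (* (R3) *)
  (forall i : 'I_n, beta (mscale 1 i) >= 1 - k%:R^-1) /\
  (forall i : 'I_n, beta (mscale k.-1 i) >= 1 - k%:R^-1) /\
  (forall i j : 'I_n, i != j -> beta (mpair k.-1 i 1 j) >= 1 - k%:R^-1).

Definition inAk (k : nat) (f : 'rV[R]_n -> R) : Prop :=
  exists beta : midx -> R, admissible k beta /\
    forall w, simplex w -> f w = bpoly k beta w.

Definition convex_on_simplex (f : 'rV[R]_n -> R) : Prop :=
  forall u v, simplex u -> simplex v -> forall t : R, 0 <= t <= 1 ->
    f (t *: u + (1 - t) *: v) <= t * f u + (1 - t) * f v.

Definition inA (f : 'rV[R]_n -> R) : Prop :=
  convex_on_simplex f /\
  forall w, simplex w ->
    [/\ (d%:R)^-1 <= f w <= 1,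
        (forall i : 'I_n, w 0 i <= f w) & wlast w <= f w].

End Defs.

(* Main.v *)
Require Import Defs.
From HB Require Import structures.
From mathcomp Require Import all_boot all_order all_algebra.
From mathcomp Require Import ring lra zify.
Set Implicit Arguments. Unset Strict Implicit. Unset Printing Implicit Defensive.
Import Order.TTheory GRing.Theory Num.Theory.
Local Open Scope ring_scope.

Section Proof.
Variable R : realFieldType.
Variable d : nat.
Local Notation n := d.-1.
Local Notation mi := (midx d).
Local Notation adv := (@Defs.addv d).
Local Notation ms := (@msum d).
Local Notation rv := ('rV[R]_n).
Local Notation wl := (@wlast R d).
Local Notation simp := (@simplex R d).

Definition msub (i : 'I_n) (a : mi) : mi := [ffun l => (a l - (l == i))%N].

Lemma adv0 (a : mi) : adv 0 a = a.
Proof. by apply/ffunP=> l; rewrite ffunE addn0. Qed.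

Lemma advE (i : 'I_n) (a : mi) l : adv i.+1 a l = (a l + (l == i))%N.
Proof. by rewrite ffunE eqSS eq_sym. Qed.

Lemma advC x y (a : mi) : adv x (adv y a) = adv y (adv x a).
Proof. by apply/ffunP=> l; rewrite !ffunE addnAC. Qed.

Lemma msum_adv (i : 'I_n) (a : mi) : ms (adv i.+1 a) = (ms a).+1.
Proof.
rewrite /msum (eq_bigr (fun l => a l + (l == i))%N); last by move=> l _; rewrite advE.
rewrite big_split /= [X in (_ + X)%N](bigD1 i) //= eqxx.
rewrite [X in (_ + (_ + X))%N]big1 ?addn0 ?addn1 // => l /negbTE->//.
Qed.

Lemma msub_adv (i : 'I_n) (a : mi) : msub i (adv i.+1 a) = a.
Proof. by apply/ffunP=> l; rewrite ffunE advE addnK. Qed.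

Lemma adv_msub (i : 'I_n) (a : mi) : (0 < a i)%N -> adv i.+1 (msub i a) = a.
Proof.
move=> h; apply/ffunP=> l; rewrite advE ffunE.
by have [->|ne] := eqVneq l i => /=; lia.
Qed.

Lemma msum_msub (i : 'I_n) (a : mi) : (0 < a i)%N -> ms (msub i a) = (ms a).-1.
Proof. by move=> h; rewrite -{2}(adv_msub h) msum_adv. Qed.

Lemma msub_advC (i l : 'I_n) (a : mi) : l != i -> msub l (adv i.+1 a) = adv i.+1 (msub l a).
Proof.
move=> ne; apply/ffunP=> j; rewrite [LHS]ffunE advE [RHS]advE ffunE.
have [->|nj] := eqVneq j l; first by rewrite (negbTE ne) /=; lia.
by rewrite /=; lia.
Qed.

Lemma le_msum (a : mi) (i : 'I_n) : (a i <= ms a)%N.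
Proof. by rewrite /msum (bigD1 i) //= leq_addr. Qed.

Definition SW (w : rv) (F : nat -> R) : R :=
  wl w * F 0%N + \sum_(i < n) w 0 i * F i.+1.

Definition Wc (w : rv) (x : 'I_n.+1) : R :=
  match unlift ord0 x with None => wl w | Some i => w 0 i end.

Lemma SWE w F : SW w F = \sum_(x < n.+1) Wc w x * F x.
Proof.
rewrite big_ord_recl /Wc /= unlift_none; congr (_ + _).
by apply: eq_bigr => i _; rewrite liftK.
Qed.

Lemma sumWc w : \sum_(x < n.+1) Wc w x = 1.
Proof.
rewrite big_ord_recl /Wc unlift_none (eq_bigr (fun i => w 0 i)).
  by rewrite /wlast subrK.
by move=> i _; rewrite liftK.
Qed.

Lemma SW_ext w F G : F 0%N = G 0%N -> (forall i : 'I_n, F i.+1 = G i.+1) ->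
  SW w F = SW w G.
Proof. by move=> h0 hS; rewrite /SW h0; congr (_ + _); apply: eq_bigr => i _; rewrite hS. Qed.

Lemma SW_const w c : SW w (fun _ => c) = c.
Proof. by rewrite SWE -big_distrl /= sumWc mul1r. Qed.

Lemma SW_add w F G : SW w (fun x => F x + G x) = SW w F + SW w G.
Proof. by rewrite !SWE -big_split /=; apply: eq_bigr => x _; rewrite mulrDr. Qed.

Lemma SW_scale w c F : SW w (fun x => c * F x) = c * SW w F.
Proof. by rewrite !SWE mulr_sumr; apply: eq_bigr => x _; rewrite mulrCA. Qed.

Lemma SW_sub w F G : SW w (fun x => F x - G x) = SW w F - SW w G.
Proof.
rewrite (SW_ext w (G := fun x => F x + (-1) * G x)) ?SW_add ?SW_scale; first by rewrite mulN1r.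
  by rewrite mulN1r. by move=> i; rewrite mulN1r.
Qed.

Lemma SW_swap x y (G : nat -> nat -> R) :
  SW y (fun p => SW x (fun q => G p q)) = SW x (fun q => SW y (fun p => G p q)).
Proof.
rewrite SWE (eq_bigr (fun p => \sum_(q < n.+1) Wc y p * (Wc x q * G p q))); last first.
  by move=> p _; rewrite SWE mulr_sumr.
rewrite exchange_big SWE; apply: eq_bigr => q _; rewrite SWE mulr_sumr.
by apply: eq_bigr => p _; rewrite mulrCA.
Qed.


Lemma wlast_ge0 (w : rv) : simp w -> 0 <= wl w.
Proof. by case=> _ h; rewrite /wlast subr_ge0. Qed.

Lemma SW_ge0 (w : rv) F : simp w -> 0 <= F 0%N -> (forall i : 'I_n, 0 <= F i.+1) -> 0 <= SW w F.
Proof.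
move=> hw h0 hS; rewrite /SW addr_ge0 ?mulr_ge0 ?wlast_ge0 //.
by apply: sumr_ge0 => i _; rewrite mulr_ge0 //; case: hw.
Qed.

Lemma SW_le (w : rv) F G : simp w -> F 0%N <= G 0%N -> (forall i : 'I_n, F i.+1 <= G i.+1) ->
  SW w F <= SW w G.
Proof.
move=> hw h0 hS; rewrite -subr_ge0 -SW_sub SW_ge0 // ?subr_ge0 // => i; rewrite subr_ge0; exact: hS.
Qed.

Lemma SW_affine (u v : rv) t F :
  SW (t *: u + (1 - t) *: v) F = t * SW u F + (1 - t) * SW v F.
Proof.
rewrite /SW /wlast.
have -> : \sum_(i < n) (t *: u + (1 - t) *: v) 0 i = t * \sum_(i < n) u 0 i + (1 - t) * \sum_(i < n) v 0 i.
  by rewrite !mulr_sumr -big_split; apply: eq_bigr => i _; rewrite !mxE.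
rewrite [X in _ * _ + X = _](eq_bigr (fun i => t * (u 0 i * F i.+1) + (1 - t) * (v 0 i * F i.+1))); last first.
  by move=> i _; rewrite !mxE; ring.
rewrite big_split /= -!mulr_sumr; ring.
Qed.

(* ------------- blossom-like form Bl -------------- *)
Fixpoint Bl (b : mi -> R) (s : seq rv) : R :=
  match s with
  | [::] => b (mzero d)
  | w :: s' => SW w (fun x => Bl (fun a => b (adv x a)) s')
  end.

Lemma Bl_ext s b1 b2 : (forall a, b1 a = b2 a) -> Bl b1 s = Bl b2 s.
Proof.
elim: s b1 b2 => [|w s IH] b1 b2 h /=; first exact: h.
by apply: SW_ext => [|i]; apply: IH => a; apply: h.
Qed.

Lemma inGamma_adv0 m (a : mi) : inGamma m a -> inGamma m.+1 (adv 0 a).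
Proof. by rewrite adv0 /inGamma => h; apply: leqW. Qed.

Lemma inGamma_advS m (i : 'I_n) (a : mi) : inGamma m a -> inGamma m.+1 (adv i.+1 a).
Proof. by rewrite /inGamma msum_adv. Qed.

Lemma Bl_eq_on s b1 b2 : (forall a, inGamma (size s) a -> b1 a = b2 a) -> Bl b1 s = Bl b2 s.
Proof.
elim: s b1 b2 => [|w s IH] b1 b2 h /=; first by apply: h; rewrite /inGamma /msum big1 // => i _; rewrite ffunE.
apply: SW_ext => [|i]; apply: IH => a ha; apply: h.
  exact: inGamma_adv0. exact: inGamma_advS.
Qed.

Lemma Bl_const s c : Bl (fun _ => c) s = c.
Proof.
elim: s c => [|w s IH] c //=.
by rewrite (SW_ext w (G := fun _ => c)) ?SW_const // => [|i]; rewrite IH.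
Qed.

Lemma Bl_add s b1 b2 : Bl (fun a => b1 a + b2 a) s = Bl b1 s + Bl b2 s.
Proof.
elim: s b1 b2 => [|w s IH] b1 b2 //=.
rewrite -SW_add; apply: SW_ext => [|i]; exact: IH.
Qed.

Lemma Bl_scale s c b : Bl (fun a => c * b a) s = c * Bl b s.
Proof.
elim: s b => [|w s IH] b //=.
rewrite -SW_scale; apply: SW_ext => [|i]; exact: IH.
Qed.

Lemma Bl_sub s b1 b2 : Bl (fun a => b1 a - b2 a) s = Bl b1 s - Bl b2 s.
Proof.
rewrite (Bl_ext _ (b2 := fun a => b1 a + (-1) * b2 a)) ?Bl_add ?Bl_scale ?mulN1r //.
by move=> a; rewrite mulN1r.
Qed.

Lemma Bl_sum s I (r : seq I) (P : pred I) (F : I -> mi -> R) :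
  Bl (fun a => \sum_(j <- r | P j) F j a) s = \sum_(j <- r | P j) Bl (F j) s.
Proof.
elim: r => [|j r IH]; first by rewrite big_nil (Bl_ext _ (b2 := fun _ => 0)) ?Bl_const // => a; rewrite big_nil.
rewrite big_cons; case: (boolP (P j)) => hP.
  by rewrite -IH -Bl_add; apply: Bl_ext => a; rewrite big_cons hP.
by rewrite -IH; apply: Bl_ext => a; rewrite big_cons (negbTE hP).
Qed.

Lemma Bl_ge0 s b : (forall w, w \in s -> simp w) ->
  (forall a, inGamma (size s) a -> 0 <= b a) -> 0 <= Bl b s.
Proof.
elim: s b => [|w s IH] b hs hb /=.
  by apply: hb; rewrite /inGamma /msum big1 // => i _; rewrite ffunE.
have hs' : forall w', w' \in s -> simp w' by move=> w' h; apply: hs; rewrite inE h orbT.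
apply: SW_ge0 => [||i]; first by apply: hs; rewrite inE eqxx.
  by apply: IH => // a ha; apply: hb; exact: inGamma_adv0.
by apply: IH => // a ha; apply: hb; exact: inGamma_advS.
Qed.

Lemma Bl_le s b1 b2 : (forall w, w \in s -> simp w) ->
  (forall a, inGamma (size s) a -> b1 a <= b2 a) -> Bl b1 s <= Bl b2 s.
Proof.
move=> hs h; rewrite -subr_ge0 -Bl_sub; apply: Bl_ge0 => // a ha.
by rewrite subr_ge0 h.
Qed.

Lemma Bl_swap b x y s : Bl b (y :: x :: s) = Bl b (x :: y :: s).
Proof.
rewrite /= SW_swap; apply: SW_ext => [|i]; apply: SW_ext => [|j];
  by apply: Bl_ext => a; congr b; apply: advC.
Qed.

Lemma Bl_move s1 b x s2 : Bl b (s1 ++ x :: s2) = Bl b (x :: s1 ++ s2).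
Proof.
elim: s1 b => [|y s1 IH] b //=.
rewrite (SW_ext y (G := fun p => Bl (fun a => b (adv p a)) (x :: s1 ++ s2))) => [|//|i].
  by rewrite -[RHS]/(Bl b (x :: y :: s1 ++ s2)) -Bl_swap.
by rewrite IH.
Qed.

Section Seq.
Variable c : nat -> R.
Variable k : nat.
Hypothesis hc : forall j, (j.+2 <= k)%N -> 0 <= c j.+2 - 2 * c j.+1 + c j.
Let e i := c i.+1 - c i.

Lemma e_mono i j : (i <= j)%N -> (j < k)%N -> e i <= e j.
Proof.
elim: j => [|j IH]; first by rewrite leqn0 => /eqP->.
rewrite leq_eqVlt => /orP[/eqP->//|hij] hjk.
rewrite ltnS in hij.
apply: le_trans (IH hij (ltnW hjk)) _.
have := hc hjk; rewrite /e; lra.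
Qed.

Lemma sum_e j : (\sum_(0 <= i < j) e i) = c j - c 0.
Proof. by rewrite telescope_sumr. Qed.

Lemma tangent : k%:R * (c 1 - c 0) <= c k - c 0.
Proof.
rewrite -(sum_e k).
have -> : k%:R * (c 1 - c 0) = \sum_(0 <= i < k) e 0.
  by rewrite sumr_const_nat subn0 mulr_natl.
rewrite big_nat_cond [X in _ <= X]big_nat_cond; apply: ler_sum => i /andP[/andP[_ hi] _].
exact: e_mono.
Qed.

Lemma chord j : (j <= k)%N -> k%:R * c j <= j%:R * c k + (k - j)%:R * c 0.
Proof.
rewrite leq_eqVlt => /orP[/eqP->|hjk]; first by rewrite subnn mul0r addr0.
have hA : c j - c 0 <= j%:R * e j.
  rewrite -(sum_e j).
  have -> : j%:R * e j = \sum_(0 <= i < j) e j by rewrite sumr_const_nat subn0 mulr_natl.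
  rewrite big_nat_cond [X in _ <= X]big_nat_cond; apply: ler_sum => i /andP[/andP[_ hi] _].
  by apply: e_mono => //; apply: ltnW.
have hB : (k - j)%:R * e j <= c k - c j.
  rewrite -(telescope_sumr c (ltnW hjk)).
  have -> : (k - j)%:R * e j = \sum_(j <= i < k) e j by rewrite sumr_const_nat mulr_natl.
  rewrite big_nat_cond [X in _ <= X]big_nat_cond; apply: ler_sum => i /andP[/andP[hi1 hi2] _].
  exact: e_mono.
have hk : k%:R = j%:R + (k - j)%:R :> R by rewrite -natrD subnKC // ltnW.
have h1 : 0 <= (k - j)%:R * (j%:R * e j - (c j - c 0)) :> R by rewrite mulr_ge0 ?subr_ge0.
have h2 : 0 <= j%:R * (c k - c j - (k - j)%:R * e j) :> R by rewrite mulr_ge0 ?subr_ge0.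
rewrite hk; nra.
Qed.
End Seq.

Lemma quad_ge0 (H : 'I_n -> 'I_n -> R) (x : 'I_n -> R) :
  (forall i j, H i j = H j i) ->
  (forall i, 0 <= H i i - \sum_(j < n | j != i) `|H i j|) ->
  0 <= \sum_i \sum_j x i * x j * H i j.
Proof.
move=> hs hd.
have step1 : \sum_i \sum_j x i * x j * H i j =
  \sum_i (x i ^+ 2 * H i i + \sum_(j | j != i) x i * x j * H i j).
  by apply eq_bigr; move=> i _; rewrite (bigD1 i) //= ?expr2.
have hterm : forall i j, - (`|H i j| * x i ^+ 2 + `|H i j| * x j ^+ 2) / 2 <= x i * x j * H i j.
  move=> i j.
  have h0 : `|x i * x j * H i j| <= `|H i j| * (x i ^+ 2 + x j ^+ 2) / 2.
    rewrite !normrM -[`|_| * _]mulrC.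
    have : 0 <= (`|x i| - `|x j|) ^+ 2 by apply: sqr_ge0.
    have hn : 0 <= `|H i j| by [].
    rewrite -[x i ^+ 2]real_normK ?num_real // -[x j ^+ 2]real_normK ?num_real //.
    move=> hsq.
    have : 0 <= `|H i j| * ((`|x i| - `|x j|) ^+ 2) by rewrite mulr_ge0.
    move=> hp; nra.
  move: h0; rewrite ler_norml => /andP[h1 _]; apply: le_trans h1; rewrite mulrDr; lra.
have S12 : \sum_i \sum_(j | j != i) `|H i j| * x j ^+ 2 =
           \sum_i \sum_(j | j != i) `|H i j| * x i ^+ 2.
  transitivity (\sum_i \sum_j (if j != i then `|H i j| * x j ^+ 2 else 0)).
    by apply eq_bigr; move=> i _; rewrite big_mkcond.
  rewrite exchange_big /=; apply eq_bigr; move=> j _; rewrite [RHS]big_mkcond /=.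
  by apply eq_bigr; move=> i _; rewrite eq_sym hs.
rewrite step1.
apply: le_trans (_ : 0 <= \sum_i (x i ^+ 2 * H i i +
   \sum_(j | j != i) (- (`|H i j| * x i ^+ 2 + `|H i j| * x j ^+ 2) / 2))) _; last first.
  by apply: ler_sum => i _; rewrite lerD2l; apply: ler_sum => j _; apply: hterm.
have -> : \sum_i (x i ^+ 2 * H i i +
   \sum_(j | j != i) (- (`|H i j| * x i ^+ 2 + `|H i j| * x j ^+ 2) / 2)) =
   \sum_i (x i ^+ 2 * H i i) + - (\sum_i \sum_(j | j != i) `|H i j| * x i ^+ 2 +
                                 \sum_i \sum_(j | j != i) `|H i j| * x j ^+ 2) / 2.
  rewrite big_split /=; congr (_ + _).
  rewrite -[in RHS]big_split /= -sumrN mulr_suml; apply eq_bigr; move=> i _.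
  by rewrite -big_split /= -sumrN mulr_suml.
rewrite S12.
have -> : - (\sum_i \sum_(j | j != i) `|H i j| * x i ^+ 2 + \sum_i \sum_(j | j != i) `|H i j| * x i ^+ 2) / 2
   = - \sum_i x i ^+ 2 * \sum_(j | j != i) `|H i j|.
  have h2 : forall z : R, (z + z) / 2 = z by move=> z; field.
  rewrite mulNr h2; congr (- _).
  by apply eq_bigr; move=> i _; rewrite mulr_sumr; apply eq_bigr; move=> j _; rewrite mulrC.
rewrite -sumrB; apply: sumr_ge0 => i _; rewrite -mulrBr mulr_ge0 ?sqr_ge0 //.
Qed.

Lemma SW_aff w F : SW w F = F 0%N + \sum_(i < n) w 0 i * (F i.+1 - F 0%N).
Proof.
rewrite /SW /wlast mulrBl mul1r mulr_suml.
rewrite [X in _ = _ + X](eq_bigr (fun i => w 0 i * F i.+1 - w 0 i * F 0%N)); last by move=> i _; rewrite mulrBr.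
rewrite sumrB; ring.
Qed.

Definition Tb (h : 'I_n -> 'I_n -> R) (x y : rv) :=
  \sum_(i < n) x 0 i * \sum_(j < n) y 0 j * h i j.

Lemma B_expand (x y : rv) (G : nat -> nat -> R) :
  SW x (fun p => SW y (G p)) =
  G 0%N 0%N + \sum_(j < n) y 0 j * (G 0%N j.+1 - G 0%N 0%N)
  + \sum_(i < n) x 0 i * (G i.+1 0%N - G 0%N 0%N)
  + Tb (fun i j => G i.+1 j.+1 - G i.+1 0%N - G 0%N j.+1 + G 0%N 0%N) x y.
Proof.
rewrite SW_aff (SW_aff y (G 0%N)) -!addrA; congr (_ + (_ + _)).
rewrite /Tb -big_split /=; apply eq_bigr; move=> i _.
rewrite -mulrDr; congr (_ * _).
rewrite !SW_aff.
have -> : \sum_(j < n) y 0 j * (G i.+1 j.+1 - G i.+1 0%N - G 0%N j.+1 + G 0%N 0%N)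
  = \sum_(j < n) y 0 j * (G i.+1 j.+1 - G i.+1 0%N) - \sum_(j < n) y 0 j * (G 0%N j.+1 - G 0%N 0%N).
  by rewrite -sumrB; apply eq_bigr; move=> j _; ring.
ring.
Qed.

Lemma Tb_bil h (u v : rv) :
  \sum_(i < n) \sum_(j < n) (u 0 i - v 0 i) * (u 0 j - v 0 j) * h i j =
  Tb h u u - Tb h u v - Tb h v u + Tb h v v.
Proof.
rewrite /Tb.
have -> : \sum_(i < n) \sum_(j < n) (u 0 i - v 0 i) * (u 0 j - v 0 j) * h i j =
  \sum_(i < n) ((u 0 i * \sum_(j < n) u 0 j * h i j - u 0 i * \sum_(j < n) v 0 j * h i j)
             - (v 0 i * \sum_(j < n) u 0 j * h i j - v 0 i * \sum_(j < n) v 0 j * h i j)).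
  apply eq_bigr; move=> i _.
  rewrite -!mulrBr -mulrBl -sumrB mulr_sumr; apply eq_bigr; move=> j _; ring.
by rewrite !sumrB; ring.
Qed.

Lemma D2_sym (b : mi -> R) (i j : 'I_n) a : D2 b i.+1 j.+1 0 a = D2 b j.+1 i.+1 0 a.
Proof. by rewrite /D2 /D1 !adv0 advC; ring. Qed.

Definition R1 (k : nat) (b : mi -> R) := forall a : mi, inGamma (k - 2) a -> forall i : 'I_n,
     D2 b i.+1 i.+1 0 a - \sum_(j < n | j != i) `| D2 b i.+1 j.+1 0 a | >= 0.

Definition cs (b : mi -> R) k (u v : rv) j := Bl b (nseq j u ++ nseq (k - j) v).

Lemma second_diff b k (hR : R1 k b) (u v : rv) : simp u -> simp v ->
  forall jj, (jj.+2 <= k)%N -> 0 <= cs b k u v jj.+2 - 2 * cs b k u v jj.+1 + cs b k u v jj.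
Proof.
move=> hu hv jj hj.
set r := nseq jj u ++ nseq (k - jj.+2) v.
have e2 : cs b k u v jj.+2 = Bl b (u :: u :: r) by [].
have e1 : cs b k u v jj.+1 = Bl b (u :: v :: r).
  rewrite /cs; have -> : (k - jj.+1 = (k - jj.+2).+1)%N by lia.
  by rewrite -Bl_swap -(Bl_move (u :: nseq jj u) b v).
have e0 : cs b k u v jj = Bl b (v :: v :: r).
  rewrite /cs; have -> : (k - jj = (k - jj.+2).+2)%N by lia.
  rewrite (Bl_move (nseq jj u) b v).
  by rewrite (Bl_move (v :: nseq jj u) b v).
have e1' : Bl b (u :: v :: r) = Bl b (v :: u :: r) by rewrite Bl_swap.
rewrite e2 e0 e1 (_ : 2 * Bl b (u :: v :: r) = Bl b (u :: v :: r) + Bl b (v :: u :: r)); last first.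
  by rewrite -e1'; ring.
set G := fun p q => Bl (fun a => b (adv p (adv q a))) r.
have hB : forall x y, Bl b (x :: y :: r) = SW x (fun p => SW y (G p)) by [].
rewrite !hB !B_expand.
set h := (fun i j : 'I_n => G i.+1 j.+1 - G i.+1 0%N - G 0%N j.+1 + G 0%N 0%N).
suff HT : 0 <= Tb h u u - Tb h u v - Tb h v u + Tb h v v.
  by apply: (le_trans HT); rewrite le_eqVlt; apply/orP; left; apply/eqP; ring.
rewrite -Tb_bil.
have hh : forall i j, h i j = Bl (fun a => D2 b i.+1 j.+1 0 a) r.
  move=> i j; rewrite /h /G -!Bl_sub -Bl_add; apply: Bl_ext => a.
  by rewrite /D2 /D1 !adv0 advC; ring.
rewrite (eq_bigr (fun i => \sum_(j < n) Bl (fun a => (u 0 i - v 0 i) * (u 0 j - v 0 j) * D2 b i.+1 j.+1 0 a) r)); last first.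
  by move=> i _; apply eq_bigr; move=> j _; rewrite hh -Bl_scale.
rewrite (eq_bigr (fun i => Bl (fun a => \sum_(j < n) (u 0 i - v 0 i) * (u 0 j - v 0 j) * D2 b i.+1 j.+1 0 a) r)); last first.
  by move=> i _; rewrite Bl_sum.
rewrite -Bl_sum; apply: Bl_ge0.
  by move=> w; rewrite mem_cat !mem_nseq => /orP[/andP[_ /eqP->]|/andP[_ /eqP->]].
move=> a ha; apply: quad_ge0 => [i j|i]; first exact: D2_sym.
apply: hR; move: ha; rewrite /r size_cat !size_nseq.
by have -> : (jj + (k - jj.+2) = k - 2)%N by lia.
Qed.

Lemma Bl_cons_aff b (u v : rv) t s :
  Bl b ((t *: u + (1 - t) *: v) :: s) = t * Bl b (u :: s) + (1 - t) * Bl b (v :: s).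
Proof. by rewrite /= SW_affine. Qed.

Lemma simp_comb (u v : rv) t : simp u -> simp v -> 0 <= t <= 1 -> simp (t *: u + (1 - t) *: v).
Proof.
move=> [hu1 hu2] [hv1 hv2] /andP[ht0 ht1]; split.
  by move=> i; rewrite !mxE addr_ge0 ?mulr_ge0 // subr_ge0.
have -> : \sum_(i < n) (t *: u + (1 - t) *: v) 0 i = t * \sum_(i < n) u 0 i + (1 - t) * \sum_(i < n) v 0 i.
  by rewrite !mulr_sumr -big_split; apply eq_bigr; move=> i _; rewrite !mxE.
have h1 : t * \sum_(i < n) u 0 i <= t by rewrite -[X in _ <= X]mulr1 ler_wpM2l.
have h2 : (1 - t) * \sum_(i < n) v 0 i <= 1 - t by rewrite -[X in _ <= X]mulr1 ler_wpM2l // subr_ge0.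
lra.
Qed.

Section Conv.
Variable b : mi -> R.
Variable k : nat.
Hypothesis hk : (2 <= k)%N.
Hypothesis hR : R1 k b.

Lemma conv_chain (u v : rv) t : simp u -> simp v -> 0 <= t <= 1 ->
  forall m a, (m + a <= k)%N ->
  k%:R * Bl b (nseq m (t *: u + (1 - t) *: v) ++ nseq a u ++ nseq (k - m - a) v)
  <= k%:R * cs b k u v 0 + (a%:R + m%:R * t) * (cs b k u v k - cs b k u v 0).
Proof.
move=> hu hv /andP[ht0 ht1].
set z := t *: u + (1 - t) *: v.
have hc := second_diff hR hu hv.
elim=> [|m IH] a hma.
  rewrite /= subn0 mul0r addr0.
  have := chord hc (leq_trans (leq_addl _ _) hma).
  rewrite /cs natrB; last by rewrite add0n in hma.
  move=> h; apply: le_trans h _; rewrite le_eqVlt; apply/orP; left; apply/eqP; ring.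
have e1 : Bl b (u :: nseq m z ++ nseq a u ++ nseq (k - m.+1 - a) v) =
          Bl b (nseq m z ++ nseq a.+1 u ++ nseq (k - m - a.+1) v).
  rewrite (_ : (k - m.+1 - a = k - m - a.+1)%N); last by lia.
  by rewrite -(Bl_move (nseq m z) b u).
have e2 : Bl b (v :: nseq m z ++ nseq a u ++ nseq (k - m.+1 - a) v) =
          Bl b (nseq m z ++ nseq a u ++ nseq (k - m - a) v).
  have -> : (k - m - a = (k - m.+1 - a).+1)%N by lia.
  by rewrite catA -(Bl_move (nseq m z ++ nseq a u) b v) -catA.
have hma1 : (m + a.+1 <= k)%N by lia.
have hma0 : (m + a <= k)%N by lia.
have IH1 := IH a.+1 hma1; rewrite -e1 in IH1.
have IH0 := IH a hma0; rewrite -e2 in IH0.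
rewrite (_ : nseq m.+1 z ++ _ = z :: (nseq m z ++ nseq a u ++ nseq (k - m.+1 - a) v)) //.
rewrite /z Bl_cons_aff -/z.
set X := Bl b (u :: _); set Y := Bl b (v :: _).
set D := cs b k u v k - cs b k u v 0.
set C := cs b k u v 0.
have H1 := ler_wpM2l ht0 IH1.
have ht1' : 0 <= 1 - t by rewrite subr_ge0.
have H0 := ler_wpM2l ht1' IH0.
rewrite -natr1 in H1; rewrite -natr1.
have -> : k%:R * (t * X + (1 - t) * Y) = t * (k%:R * X) + (1 - t) * (k%:R * Y) by ring.
apply: le_trans (lerD H1 H0) _.
rewrite le_eqVlt; apply/orP; left; apply/eqP; rewrite /C /D; ring.
Qed.

Lemma convex_Bl (u v : rv) t : simp u -> simp v -> 0 <= t <= 1 ->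
  Bl b (nseq k (t *: u + (1 - t) *: v)) <= t * Bl b (nseq k u) + (1 - t) * Bl b (nseq k v).
Proof.
move=> hu hv ht.
have hk0' : (k + 0 <= k)%N by rewrite addn0.
have := conv_chain hu hv ht hk0'.
rewrite subnn /= !cats0 /cs subnn subn0 cats0 /= add0r.
have hk0 : (0 : R) < k%:R by rewrite ltr0n; lia.
move=> h.
have h' : k%:R * Bl b (nseq k (t *: u + (1 - t) *: v)) <= k%:R * (t * Bl b (nseq k u) + (1 - t) * Bl b (nseq k v)).
  apply: le_trans h _; rewrite le_eqVlt; apply/orP; left; apply/eqP; ring.
by rewrite ler_pM2l in h'.
Qed.

End Conv.

Definition vo : rv := \row_(j < n) 0.
Definition ve (i : 'I_n) : rv := \row_(j < n) ((j == i)%:R).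

Lemma wl_o : wl vo = 1.
Proof. by rewrite /wlast big1 ?subr0 // => i _; rewrite mxE. Qed.

Lemma sum_ind (i : 'I_n) (F : 'I_n -> R) : \sum_(j < n) (j == i)%:R * F j = F i.
Proof.
rewrite (bigD1 i) //= eqxx mul1r big1 ?addr0 // => j /negbTE->; by rewrite mul0r.
Qed.

Lemma wl_e i : wl (ve i) = 0.
Proof.
rewrite /wlast (eq_bigr (fun j => (j == i)%:R * 1)); last by move=> j _; rewrite mxE mulr1.
by rewrite sum_ind subrr.
Qed.

Lemma simp_o : simp vo.
Proof. by split=> [i|]; rewrite ?mxE // -subr_ge0 -/(wlast vo) wl_o. Qed.

Lemma simp_e i : simp (ve i).
Proof. by split=> [j|]; rewrite ?mxE ?ler0n // -subr_ge0 -/(wlast (ve i)) wl_e. Qed.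

Lemma SW_o F : SW vo F = F 0%N.
Proof. by rewrite /SW wl_o mul1r big1 ?addr0 // => i _; rewrite mxE mul0r. Qed.

Lemma SW_e i F : SW (ve i) F = F i.+1.
Proof.
rewrite /SW wl_e mul0r add0r (eq_bigr (fun j => (j == i)%:R * F j.+1)) ?sum_ind //.
by move=> j _; rewrite mxE.
Qed.

Lemma Bl_o g m : Bl g (nseq m vo) = g (mzero d).
Proof.
elim: m g => [|m IH] g //=; rewrite SW_o IH; congr g; exact: adv0.
Qed.

Lemma mscale0 (i : 'I_n) : mscale 0 i = mzero d.
Proof. by apply/ffunP=> l; rewrite !ffunE; case: ifP. Qed.

Lemma adv_mscale (i : 'I_n) m : adv i.+1 (mscale m i) = mscale m.+1 i.
Proof.
apply/ffunP=> l; rewrite advE !ffunE.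
by case: (l == i) => /=; rewrite ?addn1 ?addn0.
Qed.

Lemma adv_mzero (i : 'I_n) : adv i.+1 (mzero d) = mscale 1 i.
Proof. by rewrite -(mscale0 i) adv_mscale. Qed.

Lemma adv_mscale_ne (i j : 'I_n) m : j != i -> adv j.+1 (mscale m i) = mpair m i 1 j.
Proof.
move=> ne; apply/ffunP=> l; rewrite advE !ffunE.
by case: (eqVneq l i) => _ /=; case: (l == j).
Qed.

Lemma Bl_e g (i : 'I_n) m : Bl g (nseq m (ve i)) = g (mscale m i).
Proof.
elim: m g => [|m IH] g /=; first by rewrite mscale0.
by rewrite SW_e IH adv_mscale.
Qed.

Lemma SW_ind0 w : SW w (fun x => (x == 0%N)%:R) = wl w.
Proof. by rewrite /SW eqxx mulr1 big1 ?addr0 // => i _; rewrite mulr0. Qed.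

Lemma SW_indS w (i : 'I_n) : SW w (fun x => (x == i.+1)%:R) = w 0 i.
Proof.
rewrite /SW mulr0 add0r (eq_bigr (fun j => (j == i)%:R * w 0 j)).
  by rewrite sum_ind.
by move=> j _; rewrite eqSS mulrC.
Qed.

Section Lower.
Variable b : mi -> R.
Variable k : nat.
Hypothesis hk : (2 <= k)%N.
Hypothesis hR : R1 k b.
Hypothesis h0 : b (mzero d) = 1.
Hypothesis hsc : forall i, b (mscale k i) = 1.
Hypothesis h31 : forall i, b (mscale 1 i) >= 1 - k%:R^-1.
Hypothesis h32 : forall i, b (mscale k.-1 i) >= 1 - k%:R^-1.
Hypothesis h33 : forall i j, i != j -> b (mpair k.-1 i 1 j) >= 1 - k%:R^-1.

Let K := (k%:R : R).
Let hK : K != 0. Proof. by rewrite pnatr_eq0; lia. Qed.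

Lemma tangent_bound (w v : rv) : simp w -> simp v ->
  cs b k w v 0 + K * (cs b k w v 1 - cs b k w v 0) <= Bl b (nseq k w).
Proof.
move=> hw hv; have := tangent (second_diff hR hw hv).
by rewrite /cs subnn cats0 -/K; lra.
Qed.

Lemma lower_wl (w : rv) : simp w -> wl w <= Bl b (nseq k w).
Proof.
move=> hw; apply: le_trans (tangent_bound hw simp_o).
rewrite /cs subn0 /= Bl_o h0.
have e1 : SW w (fun x => Bl (fun a => b (adv x a)) (nseq (k - 1) vo)) = SW w (fun x => b (adv x (mzero d))).
  by apply: SW_ext => [|i]; rewrite Bl_o.
rewrite e1.
have : SW w (fun x => - K^-1 * (1 - (x == 0%N)%:R)) <= SW w (fun x => b (adv x (mzero d)) - 1).
  apply: SW_le => // [|i]; first by rewrite adv0 h0 eqxx !subrr mulr0.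
  rewrite adv_mzero (_ : ((i.+1 == 0)%N)%:R = 0 :> R) // subr0 mulr1.
  by have := h31 i; rewrite -/K; lra.
rewrite SW_sub SW_const SW_scale SW_sub SW_const SW_ind0 => h.
have := ler_wpM2l (ler0n R k) h; rewrite -/K mulrA mulrN mulfV // mulN1r => h'.
lra.
Qed.

Lemma lower_wi (w : rv) (i : 'I_n) : simp w -> w 0 i <= Bl b (nseq k w).
Proof.
move=> hw; apply: le_trans (tangent_bound hw (simp_e i)).
rewrite /cs subn0 /= Bl_e hsc.
have e1 : SW w (fun x => Bl (fun a => b (adv x a)) (nseq (k - 1) (ve i))) = SW w (fun x => b (adv x (mscale k.-1 i))).
  by apply: SW_ext => [|j]; rewrite Bl_e subn1.
rewrite e1.
have : SW w (fun x => - K^-1 * (1 - (x == i.+1)%:R)) <= SW w (fun x => b (adv x (mscale k.-1 i)) - 1).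
  apply: SW_le => // [|j]; first by rewrite adv0 (_ : ((0 == i.+1)%N)%:R = 0 :> R) // subr0 mulr1; have := h32 i; rewrite -/K; lra.
  have [->|ne] := eqVneq j i.
    by rewrite adv_mscale prednK ?hsc ?eqxx ?subrr ?mulr0 //; lia.
  rewrite adv_mscale_ne // eqSS (_ : (j == i :> nat) = false); last by apply/negbTE.
  rewrite subr0 mulr1.
  have hij : i != j by rewrite eq_sym.
  by have := h33 hij; rewrite -/K; lra.
rewrite SW_sub SW_const SW_scale SW_sub SW_const SW_indS => h.
have := ler_wpM2l (ler0n R k) h; rewrite -/K mulrA mulrN mulfV // mulN1r => h'.
lra.
Qed.
End Lower.

(* ------------- degree elevation -------------- *)
Definition E (m : nat) (b : mi -> R) (a : mi) : R :=
  (m - ms a)%:R * b a + \sum_(l < n) (a l)%:R * b (msub l a).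

Lemma E_ext m b1 b2 a : (forall c, b1 c = b2 c) -> E m b1 a = E m b2 a.
Proof. by move=> h; rewrite /E h; congr (_ + _); apply eq_bigr; move=> l _; rewrite h. Qed.

Lemma E_shift0 m b a : (ms a <= m)%N -> E m.+1 b a = b a + E m b a.
Proof. by move=> h; rewrite /E subSn // -nat1r; ring. Qed.

Lemma E_shiftS m b (i : 'I_n) a : (ms a <= m)%N ->
  E m.+1 b (adv i.+1 a) = b a + E m (fun c => b (adv i.+1 c)) a.
Proof.
move=> h; rewrite /E msum_adv subSS addrA [b a + _]addrC -addrA; congr (_ + _).
rewrite (bigD1 i) //= [in RHS](bigD1 i) //= advE eqxx msub_adv addrA; congr (_ + _).
  rewrite natrD mulrDl mul1r addrC; congr (_ + _).
  case: (posnP (a i)) => [->|hp]; first by rewrite !mul0r.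
  by rewrite adv_msub.
apply eq_bigr; move=> l hl; rewrite advE (negbTE hl) addn0 msub_advC //.
Qed.

Lemma E_sub m f g a : E m (fun c => f c - g c) a = E m f a - E m g a.
Proof.
rewrite /E (eq_bigr (fun l => (a l)%:R * f (msub l a) - (a l)%:R * g (msub l a))).
  by rewrite sumrB; ring.
by move=> l _; rewrite mulrBr.
Qed.

Lemma E_D2 m b (i j : 'I_n) a : (ms a <= m)%N ->
  D2 (E m.+2 b) i.+1 j.+1 0 a = E m (fun c => D2 b i.+1 j.+1 0 c) a.
Proof.
move=> h.
have hi : (ms (adv i.+1 a) <= m.+1)%N by rewrite msum_adv.
rewrite /D2 /D1 !adv0.
rewrite (E_shiftS b j hi) (E_shiftS (fun c => b (adv j.+1 c)) i h).
rewrite (E_shiftS b i (leqW h)) (E_shift0 (fun c => b (adv i.+1 c)) h).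
rewrite (E_shiftS b j (leqW h)) (E_shift0 (fun c => b (adv j.+1 c)) h).
rewrite (E_shift0 b (leqW h)) (E_shift0 b h).
rewrite (E_ext m (b1 := fun c => D2 b i.+1 j.+1 0 c)
   (b2 := fun c => ((b (adv j.+1 (adv i.+1 c)) - b (adv i.+1 c)) - (b (adv j.+1 c) - b c)))); last first.
  by move=> c; rewrite /D2 /D1 !adv0.
rewrite !E_sub; ring.
Qed.

Lemma E_ge0 m g a : (ms a <= m)%N -> (forall c, (ms c <= m.-1)%N -> 0 <= g c) -> 0 <= E m g a.
Proof.
move=> h hg; rewrite /E addr_ge0 //.
  have [hs|hs] := leqP m (ms a); first by rewrite (eqP (_ : m - ms a == 0)%N) ?mul0r // subn_eq0.
  by rewrite mulr_ge0 // hg //; lia.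
apply: sumr_ge0 => l _; case: (posnP (a l)) => [->|hp]; first by rewrite mul0r.
by rewrite mulr_ge0 // hg // msum_msub //; lia.
Qed.

Lemma E_norm m g a : `| E m g a | <= E m (fun c => `|g c|) a.
Proof.
rewrite /E; apply: le_trans (ler_normD _ _) _; apply: lerD.
  by rewrite normrM ger0_norm.
apply: le_trans (ler_norm_sum _ _ _) _; apply: ler_sum => l _.
by rewrite normrM ger0_norm.
Qed.

Lemma E_sumc m (i : 'I_n) (F : 'I_n -> mi -> R) a :
  E m (fun c => \sum_(j < n | j != i) F j c) a = \sum_(j < n | j != i) E m (F j) a.
Proof.
rewrite /E /= mulr_sumr [X in _ + X = _](eq_bigr (fun l => \sum_(j < n | j != i) (a l)%:R * F j (msub l a))); last first.
  by move=> l _; rewrite mulr_sumr.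
rewrite exchange_big /= -big_split /=; apply eq_bigr; move=> j _; done.
Qed.

Lemma E_const m c a : (ms a <= m)%N -> E m (fun _ => c) a = m%:R * c.
Proof.
move=> h; rewrite /E -big_distrl /= -mulrDl -natr_sum; congr (_ * _).
by rewrite -natrD subnK.
Qed.

Lemma Bl_E m (w : rv) b : Bl (E m b) (nseq m w) = m%:R * Bl b (nseq m.-1 w).
Proof.
elim: m b => [|m IH] b.
  by rewrite /= /E mul0r big1 ?addr0 ?mul0r // => l _; rewrite ffunE mul0r.
rewrite [LHS]/=.
rewrite (SW_ext w (G := fun x => Bl b (nseq m w) + m%:R * Bl (fun a => b (adv x a)) (nseq m.-1 w))).
- rewrite SW_add SW_const SW_scale.
  have -> : m%:R * SW w (fun x => Bl (fun a => b (adv x a)) (nseq m.-1 w)) = m%:R * Bl b (nseq m w).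
    by case: m {IH} => [|m]; rewrite ?mul0r.
  by rewrite -nat1r mulrDl mul1r.
- rewrite (Bl_eq_on (b2 := fun a => b a + E m b a)); last first.
    by move=> a; rewrite size_nseq => ha; rewrite adv0 E_shift0.
  rewrite Bl_add IH; congr (_ + _ * _); apply: Bl_ext => a; by rewrite adv0.
- move=> i; rewrite (Bl_eq_on (b2 := fun a => b a + E m (fun c => b (adv i.+1 c)) a)); last first.
    by move=> a; rewrite size_nseq => ha; rewrite E_shiftS.
  by rewrite Bl_add IH.
Qed.

Lemma msum_mscale c (i : 'I_n) : ms (mscale c i) = c.
Proof.
by rewrite /msum (bigD1 i) //= ffunE eqxx big1 ?addn0 // => l hl; rewrite ffunE (negbTE hl).
Qed.

Lemma msum_mzero : ms (mzero d) = 0%N.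
Proof. by rewrite /msum big1 // => l _; rewrite ffunE. Qed.

Lemma sum_mscale c (i : 'I_n) (g : 'I_n -> R) :
  \sum_(l < n) ((mscale c i) l)%:R * g l = c%:R * g i.
Proof.
by rewrite (bigD1 i) //= ffunE eqxx big1 ?addr0 // => l hl; rewrite ffunE (negbTE hl) mul0r.
Qed.

Lemma msum_mpair c c' (i j : 'I_n) : i != j -> ms (mpair c i c' j) = (c + c')%N.
Proof.
move=> ne; rewrite /msum (bigD1 i) //= (bigD1 j) 1?eq_sym //= !ffunE eqxx (negbTE ne).
rewrite eq_sym (negbTE ne) eqxx big1 ?addn0 //= => l /andP[hl1 hl2].
by rewrite ffunE (negbTE hl1) (negbTE hl2).
Qed.

Lemma sum_mpair c c' (i j : 'I_n) (g : 'I_n -> R) : i != j ->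
  \sum_(l < n) ((mpair c i c' j) l)%:R * g l = c%:R * g i + c'%:R * g j.
Proof.
move=> ne; rewrite (bigD1 i) //= (bigD1 j) 1?eq_sym //= !ffunE eqxx (negbTE ne).
rewrite eq_sym (negbTE ne) eqxx big1 ?addr0 ?addn0 ?add0n ?addrA // => l /andP[hl1 hl2].
by rewrite ffunE (negbTE hl1) (negbTE hl2) mul0r.
Qed.

Lemma msub_mscale c (i : 'I_n) : msub i (mscale c.+1 i) = mscale c i.
Proof. by apply/ffunP=> l; rewrite !ffunE; case: (l == i) => /=; lia. Qed.

Lemma msub_mpair1 c c' (i j : 'I_n) : i != j -> msub i (mpair c.+1 i c' j) = mpair c i c' j.
Proof.
move=> ne; apply/ffunP=> l; rewrite !ffunE.
by case: (eqVneq l i) => [->|nl] /=; rewrite ?(negbTE ne) ?subn0 //= ?addn0 ?subn1.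
Qed.

Lemma msub_mpair2 c (i j : 'I_n) : i != j -> msub j (mpair c i 1 j) = mscale c i.
Proof.
move=> ne; apply/ffunP=> l; rewrite !ffunE.
case: (eqVneq l j) => [->|nl] /=; first by rewrite eq_sym (negbTE ne) /=.
by rewrite subn0; case: (l == i); rewrite addn0.
Qed.

Lemma D2_scale c (b : mi -> R) t s r a : D2 (fun x => c * b x) t s r a = c * D2 b t s r a.
Proof. by rewrite /D2 /D1; ring. Qed.

Lemma R3_arith (K x : R) : 0 < K -> 1 - K^-1 <= x -> 1 - (K + 1)^-1 <= (K + 1)^-1 * (K * x + 1).
Proof.
move=> hK hx.
have hK1 : K + 1 != 0 by rewrite gt_eqF // ltr_wpDr.
have h1 : 0 <= K * x - K + 1.
  have : K * (1 - K^-1) <= K * x by rewrite ler_wpM2l // ltW.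
  by rewrite mulrBr mulr1 mulfV ?gt_eqF //; lra.
rewrite -subr_ge0.
have -> : (K + 1)^-1 * (K * x + 1) - (1 - (K + 1)^-1) = (K * x - K + 1) / (K + 1) by field.
by rewrite divr_ge0 // ltW // ltr_wpDr.
Qed.

Lemma adm_elev k b : (2 <= k)%N -> admissible k b ->
  admissible k.+1 (fun a => k.+1%:R^-1 * E k.+1 b a).
Proof.
move=> hk [h01 [hR [hz [hsc [h31 [h32 h33]]]]]].
have hK1 : (0 : R) < k.+1%:R by rewrite ltr0n.
have hK : (0 : R) < k%:R by rewrite ltr0n; lia.
have hK1K : (k.+1%:R : R) = k%:R + 1 by rewrite natr1.
have hinv : 0 <= (k.+1%:R : R)^-1 by rewrite invr_ge0 ltW.
split; [|split; [|split; [|split; [|split; [|split]]]]].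
- move=> a ha; rewrite /inGamma in ha; apply/andP; split.
    rewrite mulr_ge0 // E_ge0 // => c hc.
    by have /andP[] := h01 c hc.
  have hE : E k.+1 b a <= k.+1%:R.
    rewrite -subr_ge0 -[X in 0 <= X - _](mulr1 (k.+1%:R)) -(E_const 1 ha) -E_sub E_ge0 // => c hc.
    by have /andP[_ h] := h01 c hc; rewrite subr_ge0.
  by rewrite -[X in _ <= X](mulVf (lt0r_neq0 hK1)); apply: ler_wpM2l.
- move=> a ha i.
  case: k hk h01 hR hz hsc h31 h32 h33 hK1 hK hK1K hinv ha => [|[|k0]] // hk h01 hR hz hsc h31 h32 h33 hK1 hK hK1K hinv ha.
  have ha' : (ms a <= k0.+1)%N by move: ha; rewrite /inGamma; lia.
  rewrite D2_scale (E_D2 _ _ _ ha').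
  rewrite (eq_bigr (fun j : 'I_n => k0.+3%:R^-1 * `| E k0.+1 (fun c => D2 b i.+1 j.+1 0 c) a |)); last first.
    move=> j _; rewrite D2_scale (E_D2 _ _ _ ha') normrM ger0_norm //.
  rewrite -mulr_sumr -mulrBr mulr_ge0 //.
  apply: le_trans (_ : 0 <= E k0.+1 (fun c => D2 b i.+1 i.+1 0 c) a
       - \sum_(j < n | j != i) E k0.+1 (fun c => `|D2 b i.+1 j.+1 0 c|) a) _.
    rewrite -E_sumc -E_sub E_ge0 // => c hc; apply: hR.
    by rewrite /inGamma; move: hc; rewrite /=; lia.
  by rewrite lerD2l lerN2; apply: ler_sum => j _; apply: E_norm.
- by rewrite /E msum_mzero subn0 hz big1 ?addr0 ?mulr1 ?mulVf ?(lt0r_neq0 hK1) // => l _; rewrite ffunE mul0r.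
- move=> i; rewrite /E msum_mscale subnn mul0r add0r.
  by rewrite (sum_mscale _ _ (fun l => b (msub l (mscale k.+1 i)))) msub_mscale hsc mulr1 mulVf ?(lt0r_neq0 hK1).
- move=> i; rewrite /E msum_mscale (sum_mscale _ _ (fun l => b (msub l (mscale 1 i)))) msub_mscale mscale0 hz.
  by rewrite subSS subn0 mulr1 hK1K; apply: R3_arith => //.
- move=> i; rewrite /= /E msum_mscale (sum_mscale _ _ (fun l => b (msub l (mscale k i)))).
  rewrite (_ : mscale k i = mscale k.-1.+1 i); last by rewrite prednK //; lia.
  rewrite msub_mscale prednK; last by lia.
  rewrite subSn // subnn hsc mulr1 hK1K (addrC 1 (k%:R * _)).
  by apply: R3_arith => //; exact: h32.
- move=> i j ne; rewrite /= /E msum_mpair // addn1 subnn mul0r add0r.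
  rewrite (sum_mpair _ _ (fun l => b (msub l (mpair k i 1 j)))) //.
  rewrite msub_mpair2 // hsc (_ : mpair k i 1 j = mpair k.-1.+1 i 1 j); last by rewrite prednK //; lia.
  rewrite msub_mpair1 // mulr1 hK1K.
  by apply: R3_arith => //; exact: h33.
Qed.

Definition Fp (x : mi) : nat := (\prod_(i < n) (x i)`!)%N.
Definition Pp (x : mi) (w : rv) : R := \prod_(i < n) w 0 i ^+ x i.

Lemma bernE m (x : mi) (w : rv) : bern m x w = (m`!)%:R / ((Fp x * (m - ms x)`!)%N)%:R * Pp x w * wl w ^+ (m - ms x).
Proof. by []. Qed.

Lemma Fp_gt0 (x : mi) : (0 < Fp x)%N.
Proof. by apply: prodn_gt0 => i; apply: fact_gt0. Qed.

Lemma Fp_msub (x : mi) (i : 'I_n) : (0 < x i)%N -> Fp x = (x i * Fp (msub i x))%N.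
Proof.
move=> h; rewrite /Fp (bigD1 i) //= [in RHS](bigD1 i) //= ffunE eqxx subn1.
have -> : (x i)`! = (x i * (x i).-1`!)%N by rewrite -{1}(prednK h) factS prednK.
rewrite -mulnA; congr (_ * (_ * _))%N.
by apply: eq_bigr => l hl; rewrite ffunE (negbTE hl) subn0.
Qed.

Lemma Pp_msub (x : mi) (w : rv) (i : 'I_n) : (0 < x i)%N -> Pp x w = w 0 i * Pp (msub i x) w.
Proof.
move=> h; rewrite /Pp (bigD1 i) //= [in RHS](bigD1 i) //= ffunE eqxx subn1.
rewrite -{1}(prednK h) exprS -mulrA; congr (_ * (_ * _)).
by apply: eq_bigr => l hl; rewrite ffunE (negbTE hl) subn0.
Qed.

Lemma bern_rec k (x : mi) (w : rv) : (ms x <= k.+1)%N ->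
  bern k.+1 x w = (if (ms x <= k)%N then wl w * bern k x w else 0) +
    \sum_(i < n) (if (0 < x i)%N then w 0 i * bern k (msub i x) w else 0).
Proof.
move=> hs.
set s := ms x.
set M := Pp x w * wl w ^+ (k.+1 - s) / ((Fp x * (k.+1 - s)`!)%N)%:R.
have hF : (Fp x)%:R != 0 :> R by rewrite pnatr_eq0 -lt0n Fp_gt0.
have hf : forall m, (m`!)%:R != 0 :> R by move=> m; rewrite pnatr_eq0 -lt0n fact_gt0.
have hLHS : bern k.+1 x w = (k.+1)`!%:R * M.
  by rewrite bernE /M -/s natrM; field; rewrite hF hf.
have hA : (if (s <= k)%N then wl w * bern k x w else 0) = k`!%:R * (k.+1 - s)%:R * M.
  case: leqP => hsk.
    rewrite bernE /M -/s.
    have -> : (k.+1 - s = (k - s).+1)%N by lia.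
    rewrite factS exprS !natrM.
    by field; rewrite hf hF nat1r pnatr_eq0.
  have -> : (k.+1 - s = 0)%N by lia.
  by rewrite mulr0 mul0r.
have hB : forall i : 'I_n, (if (0 < x i)%N then w 0 i * bern k (msub i x) w else 0) = k`!%:R * (x i)%:R * M.
  move=> i; case: (posnP (x i)) => hx; first by rewrite hx mulr0 mul0r.
  rewrite bernE msum_msub // -/s /M (Fp_msub hx) (Pp_msub w hx).
  have -> : (k - s.-1 = k.+1 - s)%N by have := le_msum x i; rewrite -/s; lia.
  by rewrite !natrM; field; rewrite hf !pnatr_eq0 -!lt0n Fp_gt0 hx.
rewrite hLHS hA (eq_bigr _ (fun i _ => hB i)) -mulr_suml -mulr_sumr -natr_sum.
change (\sum_(i < n) x i)%N with (ms x); rewrite -/s.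
have hsum : ((k.+1 - s)%:R + s%:R = k.+1%:R :> R) by rewrite -natrD subnK.
by rewrite factS natrM -hsum; ring.
Qed.

Definition hm m (a : {ffun 'I_n -> 'I_m.+1}) : mi := [ffun i => nat_of_ord (a i)].
Definition Gs m : seq mi :=
  [seq x <- map (@hm m) (index_enum {ffun 'I_n -> 'I_m.+1}) | inGamma m x].

Lemma hm_inj m : injective (@hm m).
Proof.
move=> a1 a2 h; apply/ffunP=> i; apply: val_inj.
by have := congr1 (fun f : mi => f i) h; rewrite !ffunE.
Qed.

Lemma Gs_uniq m : uniq (Gs m).
Proof. by rewrite filter_uniq // map_inj_uniq ?index_enum_uniq //; exact: hm_inj. Qed.

Lemma mem_Gs m x : (x \in Gs m) = inGamma m x.
Proof.
rewrite mem_filter andb_idr // => hx.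
apply/mapP; exists [ffun i => inord (x i) : 'I_m.+1]; first exact: mem_index_enum.
apply/ffunP=> i; rewrite !ffunE inordK // ltnS; exact: leq_trans (le_msum x i) hx.
Qed.

Lemma sum_Gs m (s : seq mi) (F : mi -> R) : uniq s -> (forall x, (x \in s) = inGamma m x) ->
  \sum_(x <- s) F x = \sum_(x <- Gs m) F x.
Proof.
move=> hu hs; apply: perm_big; apply: uniq_perm => //; first exact: Gs_uniq.
by move=> x; rewrite hs mem_Gs.
Qed.

Lemma bpoly_Gs k b (w : rv) : bpoly k b w = \sum_(x <- Gs k) b x * bern k x w.
Proof. by rewrite /bpoly big_filter big_map. Qed.

Lemma Gs_step k b (w : rv) : \sum_(x <- Gs k.+1) b x * bern k.+1 x w =
  SW w (fun y => \sum_(x <- Gs k) b (adv y x) * bern k x w).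
Proof.
rewrite big_seq (eq_bigr (fun x : mi => b x * (if (ms x <= k)%N then wl w * bern k x w else 0) +
    \sum_(i < n) b x * (if (0 < x i)%N then w 0 i * bern k (msub i x) w else 0))); last first.
  by move=> x; rewrite mem_Gs => hx; rewrite bern_rec // mulrDr mulr_sumr.
rewrite -big_seq big_split /= exchange_big /=.
rewrite /SW; congr (_ + _).
  rewrite (eq_bigr (fun x : mi => if inGamma k x then wl w * (b x * bern k x w) else 0)); last first.
    by move=> x _; rewrite /inGamma; case: (ms x <= k)%N; rewrite ?mulr0 // mulrCA.
  rewrite -big_mkcond -big_filter -mulr_sumr.
  have hu : uniq [seq x <- Gs k.+1 | inGamma k x] by rewrite filter_uniq // Gs_uniq.
  have hmem : forall x, (x \in [seq x <- Gs k.+1 | inGamma k x]) = inGamma k x.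
    by move=> x; rewrite mem_filter mem_Gs; apply/andb_idr; rewrite /inGamma; apply: leqW.
  rewrite (sum_Gs _ hu hmem); congr (_ * _); apply: eq_bigr => x _; by rewrite adv0.
apply eq_bigr; move=> i _.
rewrite (eq_bigr (fun x : mi => if (0 < x i)%N then w 0 i * (b (adv i.+1 (msub i x)) * bern k (msub i x) w) else 0)); last first.
  by move=> x _; case: (posnP (x i)) => hx; rewrite ?mulr0 // adv_msub // mulrCA.
rewrite -big_mkcond -big_filter -mulr_sumr; congr (_ * _).
set F := [seq x <- Gs k.+1 | (0 < (x : mi) i)%N].
have e : \sum_(x <- F) b (adv i.+1 (msub i x)) * bern k (msub i x) w =
         \sum_(y <- map (msub i) F) b (adv i.+1 y) * bern k y w by rewrite big_map.
have hu : uniq (map (msub i) F).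
  rewrite map_inj_in_uniq; first by apply: filter_uniq; exact: Gs_uniq.
  move=> x1 x2.
  rewrite !mem_filter => /andP[h1 _] /andP[h2 _] he.
  by rewrite -(adv_msub h1) he adv_msub.
have hmem : forall y, (y \in map (msub i) F) = inGamma k y.
  move=> y; apply/mapP/idP => [[x hx ->]|hy].
    move: hx; rewrite mem_filter mem_Gs => /andP[hp hx].
    by rewrite /inGamma msum_msub //; move: hx; rewrite /inGamma; lia.
  exists (adv i.+1 y); last by rewrite msub_adv.
  by rewrite mem_filter mem_Gs advE eqxx addn1 /= /inGamma msum_adv.
by rewrite e (sum_Gs _ hu hmem).
Qed.

Lemma bpoly_Bl k b (w : rv) : bpoly k b w = Bl b (nseq k w).
Proof.
rewrite bpoly_Gs; elim: k b => [|k IH] b.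
  have hu : uniq [:: mzero d] by [].
  have hmem : forall x, (x \in [:: mzero d]) = inGamma 0 x.
    move=> x; rewrite inE; apply/eqP/idP => [->|h]; first by rewrite /inGamma msum_mzero.
    apply/ffunP=> i; rewrite ffunE; apply/eqP; rewrite -leqn0; exact: leq_trans (le_msum x i) h.
  rewrite -(sum_Gs _ hu hmem) big_seq1 /= bernE msum_mzero.
  have hF : Fp (mzero d) = 1%N by rewrite /Fp big1 // => i _; rewrite ffunE.
  have hP : Pp (mzero d) w = 1 by rewrite /Pp big1 // => i _; rewrite ffunE.
  by rewrite hF hP subnn fact0 mul1n expr0 !mulr1; field.
by rewrite Gs_step /=; apply: SW_ext => [|i]; apply: IH.
Qed.

End Proof.

Unset Implicit Arguments.

Theorem mainTheorem6 (R : realFieldType) (d : nat) (hd : (2 <= d)%N)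
  (k : nat) (hk : (2 <= k)%N) (f : 'rV[R]_(d.-1) -> R) :
  @inAk R d k f -> @inAk R d k.+1 f /\ @inA R d f.
Proof.
move=> [b [hadm hf]].
have hadm' := hadm.
move: hadm' => [h01 [hR [hz [hsc [h31 [h32 h33]]]]]].
have hK1 : (k.+1%:R : R) != 0 by rewrite pnatr_eq0.
split.
  exists (fun a => k.+1%:R^-1 * E k.+1 b a); split; first exact: adm_elev.
  move=> w hw; rewrite hf // !bpoly_Bl Bl_scale Bl_E /= mulrA mulVf // mul1r //.
have hsn : forall w : 'rV[R]_(d.-1), simplex w -> forall w', w' \in nseq k w -> simplex w'.
  by move=> w hw w'; rewrite mem_nseq => /andP[_ /eqP->].
split.
  move=> u v t hu hv ht; rewrite !hf //; last exact: simp_comb.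
  rewrite !bpoly_Bl; exact: convex_Bl.
move=> w hw; rewrite hf // bpoly_Bl.
set F := Bl b (nseq k w).
have hl : wlast w <= F by apply: lower_wl.
have hi : forall i, w 0 i <= F by move=> i; apply: lower_wi.
have hF1 : F <= 1.
  rewrite -(Bl_const (nseq k w) 1); apply: Bl_le; first exact: hsn.
  by move=> a; rewrite size_nseq => ha; have /andP[] := h01 a ha.
split => //; apply/andP; split => //.
have hd0 : (0 : R) < d%:R by rewrite ltr0n; lia.
have hdn : (d%:R : R) = d.-1%:R + 1 by rewrite natr1 prednK //; lia.
have hsum : \sum_(i < d.-1) w 0 i <= d.-1%:R * F.
  have -> : d.-1%:R * F = \sum_(i < d.-1) F by rewrite sumr_const card_ord mulr_natl.
  by apply: ler_sum => i _; apply: hi.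
have h1 : 1 <= d%:R * F.
  by rewrite hdn mulrDl mul1r; move: hl; rewrite /wlast; lra.
rewrite -[F](mulKf (lt0r_neq0 hd0)) -[X in X <= _]mulr1.
by apply: ler_wpM2l => //; rewrite invr_ge0 ltW.
Qed.
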